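(* The map on inversion sequences given by Algorithm A (described below) is an involution: if $\epsilon$ is an inversion sequence, $\epsilon'$ is the result of applying Algorithm A to $\epsilon$, and $\epsilon''$ is the result of applying Algorithm A to $\epsilon'$, then $\epsilon''=\epsilon$.
   Context: An inversion sequence of length $n$ is an integer sequence with $0\le\epsilon_i<i$ for all $i$. The reduction of an integer word replaces each occurrence of its $k$-th smallest distinct value by $k-1$; a consecutive pattern $\underline{p_1p_2p_3p_4}$ occurs in a sequence at position $i$ if the reduction of its entries in positions $i,\dots,i+3$ equals $p_1p_2p_3p_4$. Let $p=\underline{0102}$ and $q=\underline{0112}$. Algorithm A, on input an integer sequence $\mathrm{seq}=\epsilon_1\cdots\epsilon_n$: let $E_p$, $E_q$ be the sets of positions of occurrences of $p$, resp. $q$, in the input sequence; set $\mathrm{last}:=$ null. For $i=1,2,\dots,n$ in order: let $N_p,N_q$ be the sets of positions of occurrences of $p$, resp. $q$, in the current sequence. If $i-2\in E_p$: set $\mathrm{last}:=\mathrm{seq}[i]$ and $\mathrm{seq}[i]:=\mathrm{seq}[i-1]$. Else if $i-2\in E_q$: set $\mathrm{last}:=\mathrm{seq}[i]$ and $\mathrm{seq}[i]:=\mathrm{seq}[i-2]$. Else if $i-2\in N_p$ or $i-2\in N_q$: swap the values of $\mathrm{seq}[i]$ and $\mathrm{last}$. Output $\mathrm{seq}$. *)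

(* Defs.v *)
From mathcomp Require Import all_boot.
Set Implicit Arguments. Unset Strict Implicit. Unset Printing Implicit Defensive.

(* Sequences are lists of naturals; positions are 1-indexed as in the paper:
   entry at position i of s is  nth 0 s i.-1 . *)

Definition is_inversion_seq (s : seq nat) : bool :=
  all (fun i => nth 0 s i.-1 < i) (iota 1 (size s)).

Definition reduction (w : seq nat) : seq nat :=
  map (fun x => count (fun y => y < x) (undup w)) w.

Definition occurs_at (p s : seq nat) (i : nat) : bool :=
  [&& 0 < i, i + 3 <= size s & reduction (take 4 (drop i.-1 s)) == p].

Definition pat_p : seq nat := [:: 0; 1; 0; 2].
Definition pat_q : seq nat := [:: 0; 1; 1; 2].

Definition occ_minus2 (p s : seq nat) (i : nat) : bool :=
  (2 < i) && occurs_at p s (i - 2).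

(* One iteration (index i) of Algorithm A. [s0] is the input sequence
   (used for E_p, E_q); the state is (current sequence, last), where
   last = None stands for "null". *)
Definition algA_step (s0 : seq nat) (st : seq nat * option nat) (i : nat)
  : seq nat * option nat :=
  let: (s, last) := st in
  if occ_minus2 pat_p s0 i then
    (set_nth 0 s i.-1 (nth 0 s (i - 2)), Some (nth 0 s i.-1))
  else if occ_minus2 pat_q s0 i then
    (set_nth 0 s i.-1 (nth 0 s (i - 3)), Some (nth 0 s i.-1))
  else if occ_minus2 pat_p s i || occ_minus2 pat_q s i then
    match last with
    | Some l => (set_nth 0 s i.-1 l, Some (nth 0 s i.-1))
    | None => (s, None) (* unreachable on any input *)
    end
  else (s, last).

Definition algorithmA (s0 : seq nat) : seq nat :=
  (foldl (algA_step s0) (s0, None) (iota 1 (size s0))).1.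

(* Main.v *)
Require Import Defs.
From mathcomp Require Import all_boot zify.
Definition isp (a b c d : nat) : bool := [&& a == c, a < b & b < d].
Definition isq (a b c d : nat) : bool := [&& a < b, b == c & c < d].

Lemma cnt_le (s : seq nat) x y : x <= y -> count (fun z => z < x) s <= count (fun z => z < y) s.
Proof. move=> h; elim: s => //= z s IH; case: (ltnP z x) => h1; case: (ltnP z y) => h2 /=; lia. Qed.

Lemma cnt_lt (s : seq nat) x y : x \in s -> x < y -> count (fun z => z < x) s < count (fun z => z < y) s.
Proof.
move=> + h; elim: s => //= z s IH; rewrite inE => /orP [/eqP <-|hs].
  have := cnt_le s _ _ (ltnW h); rewrite ltnn h /=; lia.
have := IH hs; case: (ltnP z x) => h1; case: (ltnP z y) => h2 /=; lia.
Qed.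

Lemma red_cmp (w : seq nat) x y : x \in w -> y \in w ->
  let r v := count (fun z => z < v) (undup w) in
  (x < y -> r x < r y).
Proof. move=> hx hy r; apply: cnt_lt; by rewrite mem_undup. Qed.

Lemma red_p a b c d : (reduction [:: a; b; c; d] == pat_p) = isp a b c d.
Proof.
have M: forall v, v \in [:: a; b; c; d] -> v \in [:: a; b; c; d] by [].
apply/idP/idP.
- rewrite /reduction /pat_p /=.
  set r := fun v => count (fun z => z < v) (undup [:: a; b; c; d]).
  have R : forall x y, x \in [:: a; b; c; d] -> y \in [:: a; b; c; d] -> x < y -> r x < r y.
    by move=> x y hx hy; apply: red_cmp.
  have ia : a \in [:: a; b; c; d] by rewrite !inE eqxx.
  have ib : b \in [:: a; b; c; d] by rewrite !inE eqxx ?orbT.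
  have ic : c \in [:: a; b; c; d] by rewrite !inE eqxx ?orbT.
  have id : d \in [:: a; b; c; d] by rewrite !inE eqxx ?orbT.
  rewrite -/(r a) -/(r b) -/(r c) -/(r d).
  move/eqP=> [ha hb hc hd].
  have Rab := R _ _ ia ib; have Rba := R _ _ ib ia; have Rac := R _ _ ia ic; have Rca := R _ _ ic ia.
  have Rbd := R _ _ ib id; have Rdb := R _ _ id ib.
  rewrite /isp; apply/and3P; split.
  + apply/eqP; case: (ltngtP a c) => // h; [have := Rac h|have := Rca h]; lia.
  + case: (ltngtP a b) => // h; [have := Rba h; lia|subst; lia].
  + case: (ltngtP b d) => // h; [have := Rdb h; lia|subst; lia].
- rewrite /isp => /and3P [/eqP <- h1 h2].
  have e1 : (a == b) = false by apply/eqP; lia.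
  have e2 : (a == d) = false by apply/eqP; lia.
  have e3 : (b == d) = false by apply/eqP; lia.
  have e4 : (b == a) = false by apply/eqP; lia.
  rewrite /reduction /= !inE eqxx e1 e2 e3 e4 /= !ltnn.
  have -> : (b < a) = false by lia.
  have -> : (d < a) = false by lia.
  have -> : (d < b) = false by lia.
  by rewrite h1 h2 (ltn_trans h1 h2).
Qed.

Lemma red_q a b c d : (reduction [:: a; b; c; d] == pat_q) = isq a b c d.
Proof.
apply/idP/idP.
- rewrite /reduction /pat_q /=.
  set r := fun v => count (fun z => z < v) (undup [:: a; b; c; d]).
  have R : forall x y, x \in [:: a; b; c; d] -> y \in [:: a; b; c; d] -> x < y -> r x < r y.
    by move=> x y hx hy; apply: red_cmp.
  have ia : a \in [:: a; b; c; d] by rewrite !inE eqxx.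
  have ib : b \in [:: a; b; c; d] by rewrite !inE eqxx ?orbT.
  have ic : c \in [:: a; b; c; d] by rewrite !inE eqxx ?orbT.
  have id : d \in [:: a; b; c; d] by rewrite !inE eqxx ?orbT.
  rewrite -/(r a) -/(r b) -/(r c) -/(r d).
  move/eqP=> [ha hb hc hd].
  have Rab := R _ _ ia ib; have Rba := R _ _ ib ia; have Rbc := R _ _ ib ic; have Rcb := R _ _ ic ib.
  have Rcd := R _ _ ic id; have Rdc := R _ _ id ic.
  rewrite /isq; apply/and3P; split.
  + case: (ltngtP a b) => // h; [have := Rba h; lia|subst; lia].
  + apply/eqP; case: (ltngtP b c) => // h; [have := Rbc h|have := Rcb h]; lia.
  + case: (ltngtP c d) => // h; [have := Rdc h; lia|subst; lia].
- rewrite /isq => /and3P [h1 /eqP <- h2].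
  have e1 : (a == b) = false by apply/eqP; lia.
  have e2 : (a == d) = false by apply/eqP; lia.
  have e3 : (b == d) = false by apply/eqP; lia.
  rewrite /reduction /= !inE eqxx e1 e2 e3 /= !ltnn.
  have -> : (b < a) = false by lia.
  have -> : (d < a) = false by lia.
  have -> : (d < b) = false by lia.
  by rewrite h1 h2 (ltn_trans h1 h2).
Qed.
Definition Rstep (U V : nat -> nat) (A : nat -> option nat) (n t : nat) : Prop :=
  match t with
  | m.+2 =>
    if m.+4 <= n then
      if isp (U m) (U m.+1) (U m.+2) (U m.+3) then V m.+2 = V m.+1 /\ A m.+3 = Some (U m.+2)
      else if isq (U m) (U m.+1) (U m.+2) (U m.+3) then V m.+2 = V m /\ A m.+3 = Some (U m.+2)
      else if isp (V m) (V m.+1) (U m.+2) (U m.+3) || isq (V m) (V m.+1) (U m.+2) (U m.+3) then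
        match A m.+2 with
        | Some l => V m.+2 = l /\ A m.+3 = Some (U m.+2)
        | None => V m.+2 = U m.+2 /\ A m.+3 = None
        end
      else V m.+2 = U m.+2 /\ A m.+3 = A m.+2
    else V t = U t /\ A t.+1 = A t
  | _ => V t = U t /\ A t.+1 = A t
  end.

Definition FSp (X Y : nat -> nat) n p : Prop :=
  1 <= p /\ p.+3 <= n /\ Y p = X p /\ X p < X p.+2 /\ X p.+1 <= X p /\ Y p.+1 <= X p.

Definition Inv1 X Y (A : nat -> option nat) n t : Prop :=
  ((0 < t -> Y 0 = X 0) /\ (forall p, p.+1 < t -> Y p.+1 <> X p.+1 -> FSp X Y n p)) /\
  ((A t = None /\ forall s, s < t -> Y s = X s) \/
   exists k, [/\ k < t, Y k <> X k, A t = Some (X k) & forall s, k < s -> s < t -> Y s = X s]).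

Lemma inv1_keep X Y A n t : Inv1 X Y A n t -> Y t = X t -> A t.+1 = A t -> Inv1 X Y A n t.+1.
Proof.
move=> [[H0 HF] HI] hy ha; split; [split|].
- move=> _; case: t H0 HF HI hy ha => [|t] H0 *; [done|exact: H0].
- move=> p hp hne; case: (ltngtP p.+1 t) => h.
  + exact: HF.
  + lia.
  + by subst; exfalso; apply: hne.
- rewrite ha; case: HI => [[hn hs]|[k [hk hf hA hs]]].
  + left; split=> // s hs'; case: (ltngtP s t) => h; [exact: hs|lia|by subst].
  + right; exists k; split=> //; first lia.
    move=> s h1 h2; case: (ltngtP s t) => h; [exact: hs|lia|by subst].
Qed.

Lemma inv1_fire X Y A n p : Inv1 X Y A n p.+1 -> Y p.+1 <> X p.+1 -> FSp X Y n p ->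
  A p.+2 = Some (X p.+1) -> Inv1 X Y A n p.+2.
Proof.
move=> [[H0 HF] HI] hy hfs ha; split; [split|].
- move=> _; exact: H0.
- move=> q hq hne; case: (ltngtP q.+1 p.+1) => h.
  + exact: HF.
  + lia.
  + by case: h => ->.
- right; exists p.+1; split=> //; lia.
Qed.

Lemma run1 X Y A n : A 0 = None -> (forall t, t < n -> Rstep X Y A n t) ->
  forall t, t <= n -> Inv1 X Y A n t.
Proof.
move=> A0 HR; elim=> [|t IH] ht.
  split; [split=> //; by move=> p|left; split=> //].
have I := IH (ltnW ht); have R := HR t ht.
case: t ht IH I R => [|[|m]] ht IH I R.
- by case: R => h1 h2; apply: inv1_keep.
- by case: R => h1 h2; apply: inv1_keep.
rewrite /Rstep in R.
case: ifP R => hn R; last by case: R => h1 h2; apply: inv1_keep.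
have [[H0 HF] HI] := I.
have F1 : Y m.+1 <> X m.+1 -> FSp X Y n m by apply: HF.
have F2 : match m with 0 => Y 0 = X 0 | q.+1 => Y q.+1 <> X q.+1 -> FSp X Y n q end.
  by case: m {IH I R F1 hn ht HI} HF H0 => [|q] HF H0; [apply: H0|apply: HF].
rewrite /isp /isq in R.
case: ifP R => E1 R.
  case: R => hy ha.
  have hy1 : Y m.+1 = X m.+1.
    case: (eqVneq (Y m.+1) (X m.+1)) => // /eqP /F1; rewrite /FSp; lia.
  apply: inv1_fire => //; [lia|]; rewrite /FSp in F1 F2 *; lia.
case: ifP R => E2 R.
  case: R => hy ha.
  have hy1 : Y m.+1 = X m.+1.
    case: (eqVneq (Y m.+1) (X m.+1)) => // /eqP /F1; rewrite /FSp; lia.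
  have hym : Y m < X m.+1.
    case: m {IH I F1 hn ht HI HF H0} E1 E2 hy hy1 ha F2 => [|q] E1 E2 hy hy1 ha F2; first lia.
    case: (eqVneq (Y q.+1) (X q.+1)) => [|/eqP /F2]; rewrite /FSp; lia.
  apply: inv1_fire => //; [lia|]; rewrite /FSp in F1 F2 *; lia.
case: ifP R => E3 R.
  case: HI => [[hA hs]|[k [hk hf hA hs]]].
    exfalso; have := hs m; have := hs m.+1; lia.
  rewrite hA in R; case: R => hy ha.
  have hkm : k = m.
    case: (ltngtP k m) => h //.
      exfalso; have := hs m; have := hs m.+1; lia.
    have ek : k = m.+1 by lia.
    subst k; have := F1 hf; rewrite /FSp => ?; exfalso.
    have := hs m; lia.
  subst k.
  case: m {IH ht HF} hn I H0 F1 E1 E2 E3 hy ha hf hs hk hA F2 => [|q] hn I H0 F1 E1 E2 E3 hy ha hf hs hk hA F2.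
    by exfalso; apply: hf; apply: H0.
  have FF := F2 hf.
  have := hs q.+2.
  move=> hq2; have {}hq2 := hq2 (ltnSn _) (ltnSn _).
  rewrite /FSp in FF; apply: inv1_fire => //; [lia|]; rewrite /FSp; lia.
by case: R => h1 h2; apply: inv1_keep.
Qed.

Definition Inv2 X Y Z (A B : nat -> option nat) (t : nat) : Prop :=
  (forall s, s < t -> Z s = X s) /\
  ((A t = None /\ B t = None /\ forall s, s < t -> Y s = X s) \/
   exists k, [/\ k < t, Y k <> X k, A t = Some (X k), B t = Some (Y k) & forall s, k < s -> s < t -> Y s = X s]).

Lemma inv2_keep X Y Z A B t : Inv2 X Y Z A B t -> Z t = X t -> Y t = X t ->
  A t.+1 = A t -> B t.+1 = B t -> Inv2 X Y Z A B t.+1.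
Proof.
move=> [HZ HI] hz hy ha hb; split.
  move=> s hs; case: (ltngtP s t) => h; [exact: HZ|lia|by subst].
rewrite ha hb; case: HI => [[hn [hbn hs]]|[k [hk hf hA hB hs]]].
- left; do 2!split=> //; move=> s hs'; case: (ltngtP s t) => h; [exact: hs|lia|by subst].
- right; exists k; split=> //; first lia.
  move=> s h1 h2; case: (ltngtP s t) => h; [exact: hs|lia|by subst].
Qed.

Lemma inv2_fire X Y Z A B t : Inv2 X Y Z A B t -> Z t = X t -> Y t <> X t ->
  A t.+1 = Some (X t) -> B t.+1 = Some (Y t) -> Inv2 X Y Z A B t.+1.
Proof.
move=> [HZ HI] hz hy ha hb; split.
  move=> s hs; case: (ltngtP s t) => h; [exact: HZ|lia|by subst].
right; exists t; split=> //; lia.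
Qed.

Lemma run2 X Y Z A B n : A 0 = None -> B 0 = None ->
  (forall t, t < n -> Rstep X Y A n t) -> (forall t, t < n -> Rstep Y Z B n t) ->
  forall t, t <= n -> Inv2 X Y Z A B t.
Proof.
move=> A0 B0 HR1 HR2.
have [[H0 HF] _] := @run1 X Y A n A0 HR1 n (leqnn n).
elim=> [|t IH] ht.
  split; [by move=> s|left; do 2!split=> //].
have I := IH (ltnW ht); have R1 := HR1 t ht; have R2 := HR2 t ht.
case: t ht IH I R1 R2 => [|[|m]] ht IH I R1 R2.
- by case: R1 => h1 h2; case: R2 => h3 h4; apply: inv2_keep => //; rewrite h3.
- by case: R1 => h1 h2; case: R2 => h3 h4; apply: inv2_keep => //; rewrite h3.
rewrite /Rstep in R1 R2.
case: ifP R1 R2 => hn R1 R2; last first.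
  by case: R1 => h1 h2; case: R2 => h3 h4; apply: inv2_keep => //; rewrite h3.
have [HZ HI] := I.
have Zm := HZ m (ltnW (ltnSn _)); have Zm1 := HZ m.+1 (ltnSn _).
have F1 : Y m.+1 <> X m.+1 -> FSp X Y n m by apply: HF; lia.
have F3 : Y m.+3 <> X m.+3 -> FSp X Y n m.+2 by apply: HF; lia.
have F2 : match m with 0 => Y 0 = X 0 | q.+1 => Y q.+1 <> X q.+1 -> FSp X Y n q end.
  case: m {IH I R1 R2 F1 F3 hn HI HZ Zm Zm1} ht => [|q] ht; [apply: H0; lia|apply: HF; lia].
rewrite /isp /isq in R1 R2.
move: R2.
case: ifP R1 => E1 R1.
  case: R1 => hy ha.
  have hy1 : Y m.+1 = X m.+1.
    case: (eqVneq (Y m.+1) (X m.+1)) => // /eqP /F1; rewrite /FSp; lia.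
  have hym : Y m < X m.+1.
    case: m {IH I F1 F3 hn ht HI HZ H0} E1 hy hy1 ha F2 Zm Zm1 => [|q] E1 hy hy1 ha F2 Zm Zm1; first lia.
    case: (eqVneq (Y q.+1) (X q.+1)) => [|/eqP /F2]; rewrite /FSp; lia.
  have hy3 : Y m.+3 = X m.+3.
    case: (eqVneq (Y m.+3) (X m.+3)) => // /eqP /F3; rewrite /FSp; lia.
  move=> R2.
  case: ifP R2 => G1 R2; first (exfalso; lia).
  case: ifP R2 => G2 R2; last (exfalso; lia).
  case: R2 => hz hb.
  apply: inv2_fire => //; lia.
case: ifP R1 => E2 R1.
  case: R1 => hy ha.
  have hy1 : Y m.+1 = X m.+1.
    case: (eqVneq (Y m.+1) (X m.+1)) => // /eqP /F1; rewrite /FSp; lia.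
  have hym : Y m < X m.+1.
    case: m {IH I F1 F3 hn ht HI HZ H0} E1 E2 hy hy1 ha F2 Zm Zm1 => [|q] E1 E2 hy hy1 ha F2 Zm Zm1; first lia.
    case: (eqVneq (Y q.+1) (X q.+1)) => [|/eqP /F2]; rewrite /FSp; lia.
  have hy3 : Y m.+3 = X m.+3.
    case: (eqVneq (Y m.+3) (X m.+3)) => // /eqP /F3; rewrite /FSp; lia.
  move=> R2.
  case: ifP R2 => G1 R2; last (exfalso; lia).
  case: R2 => hz hb.
  apply: inv2_fire => //; lia.
case: ifP R1 => E3 R1.
  case: HI => [[hA [hB hs]]|[k [hk hf hA hB hs]]].
    exfalso; have := hs m; have := hs m.+1; lia.
  rewrite hA in R1; case: R1 => hy ha.
  have hkm : k = m.
    case: (ltngtP k m) => h //.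
      exfalso; have := hs m; have := hs m.+1; lia.
    have ek : k = m.+1 by lia.
    subst k; have := F1 hf; rewrite /FSp => ?; exfalso.
    have := hs m; lia.
  subst k.
  case: m {IH ht HF} hn I H0 F1 F3 E1 E2 E3 hy ha hf hs hk hA hB F2 Zm Zm1 HZ
    => [|q] hn I H0 F1 F3 E1 E2 E3 hy ha hf hs hk hA hB F2 Zm Zm1 HZ.
    exfalso; apply: hf; apply: H0; lia.
  have FF := F2 hf; rewrite /FSp in FF.
  have hq2 := hs q.+2 (ltnSn _) (ltnSn _).
  have hy3 : Y q.+4 = X q.+4.
    case: (eqVneq (Y q.+4) (X q.+4)) => // /eqP /F3; rewrite /FSp; lia.
  move=> R2.
  case: ifP R2 => G1 R2; first (exfalso; lia).
  case: ifP R2 => G2 R2; first (exfalso; lia).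
  case: ifP R2 => G3 R2; last (exfalso; lia).
  rewrite hB in R2; case: R2 => hz hb.
  apply: inv2_fire => //; lia.
case: R1 => hy ha.
move=> R2.
have [hz hb] : Z m.+2 = Y m.+2 /\ B m.+3 = B m.+2.
  case: (eqVneq (Y m.+3) (X m.+3)) => [hy3|/eqP /F3 FF].
    case: ifP R2 => G1 R2; first (exfalso; lia).
    case: ifP R2 => G2 R2; first (exfalso; lia).
    case: ifP R2 => G3 R2; first (exfalso; lia).
    exact: R2.
  rewrite /FSp in FF.
  case: ifP R2 => G1 R2; first (exfalso; lia).
  case: ifP R2 => G2 R2; first (exfalso; lia).
  case: ifP R2 => G3 R2; first (exfalso; lia).
  exact: R2.
apply: inv2_keep => //; lia.
Qed.

Definition st (u : seq nat) t := foldl (algA_step u) (u, None) (iota 1 t).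

Lemma st_succ u t : st u t.+1 = algA_step u (st u t) t.+1.
Proof.
rewrite /st.
have -> : iota 1 t.+1 = iota 1 t ++ [:: t.+1] by have := iotaD 1 t 1; rewrite addn1 add1n.
by rewrite foldl_cat.
Qed.

Lemma step_nth u (x : seq nat * option nat) i j : j != i.-1 ->
  nth 0 (algA_step u x i).1 j = nth 0 x.1 j.
Proof.
case: x => s l hj; rewrite /algA_step /=.
have E : forall v, nth 0 (set_nth 0 s i.-1 v) j = nth 0 s j.
  by move=> v; rewrite nth_set_nth /= (negbTE hj).
case: ifP => _; first by rewrite E.
case: ifP => _; first by rewrite E.
case: ifP => _ //; case: l => //= ?; by rewrite E.
Qed.

Lemma step_size u (x : seq nat * option nat) i : i.-1 < size x.1 ->
  size (algA_step u x i).1 = size x.1.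
Proof.
case: x => s l /= hi; rewrite /algA_step /=.
have E : forall v, size (set_nth 0 s i.-1 v) = size s.
  by move=> v; rewrite size_set_nth; apply/maxn_idPr.
case: ifP => _; first by rewrite E.
case: ifP => _; first by rewrite E.
case: ifP => _ //; case: l => //= ?; by rewrite E.
Qed.

Lemma st_frame u t : t <= size u ->
  size (st u t).1 = size u /\ forall j, t <= j -> nth 0 (st u t).1 j = nth 0 u j.
Proof.
elim: t => [|t IH] ht; first by split.
have [h1 h2] := IH (ltnW ht).
rewrite st_succ; split.
  by rewrite step_size h1.
move=> j hj; rewrite step_nth; last by apply/eqP; lia.
apply: h2; lia.
Qed.

Lemma st_stable u t t' j : t <= t' -> t' <= size u -> j < t ->
  nth 0 (st u t').1 j = nth 0 (st u t).1 j.
Proof.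
move=> htt'; elim: t' htt' => [|t' IH] htt' ht' hj; first by exfalso; lia.
case: (ltngtP t t'.+1) => h; last by subst.
  rewrite st_succ step_nth; last by apply/eqP; lia.
  apply: IH; lia.
lia.
Qed.

Lemma curL u t j : t <= size u -> j < t -> nth 0 (st u t).1 j = nth 0 (algorithmA u) j.
Proof. move=> h1 h2; rewrite /algorithmA -/(st u (size u)) (st_stable u t (size u) j) //. Qed.

Lemma curR u t j : t <= size u -> t <= j -> nth 0 (st u t).1 j = nth 0 u j.
Proof. by move=> h1 h2; have [_ ->] := st_frame u t h1. Qed.

Lemma take4 (s : seq nat) m : m + 4 <= size s ->
  take 4 (drop m s) = [:: nth 0 s m; nth 0 s m.+1; nth 0 s m.+2; nth 0 s m.+3].
Proof.
move=> h.
rewrite (drop_nth 0); last lia.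
rewrite (drop_nth 0 (n := m.+1)); last lia.
rewrite (drop_nth 0 (n := m.+2)); last lia.
rewrite (drop_nth 0 (n := m.+3)); last lia.
by rewrite /= take0.
Qed.

Lemma conc_R u t : t < size u ->
  Rstep (nth 0 u) (nth 0 (algorithmA u)) (fun t => (st u t).2) (size u) t.
Proof.
move=> ht.
have Vt : nth 0 (algorithmA u) t = nth 0 (st u t.+1).1 t.
  by rewrite -(curL u t.+1 t).
have [SZ _] := st_frame u t (ltnW ht).
have CL := fun j => @curL u t j (ltnW ht).
have CR := fun j => @curR u t j (ltnW ht).
case: t ht Vt SZ CL CR => [|[|m]] ht Vt SZ CL CR; rewrite /Rstep; cbv beta; rewrite ?Vt st_succ.
- rewrite /algA_step /occ_minus2 /=.
  by case: (st u 0) SZ CL CR => s l /= SZ CL CR; split=> //; rewrite CR.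
- rewrite /algA_step /occ_minus2 /=.
  by case: (st u 1) SZ CL CR => s l /= SZ CL CR; split=> //; rewrite CR.
have c0 : nth 0 (algorithmA u) m = nth 0 (st u m.+2).1 m by rewrite CL // leqnSn.
have c1 : nth 0 (algorithmA u) m.+1 = nth 0 (st u m.+2).1 m.+1 by rewrite CL // ltnSn.
rewrite c0 c1.
have c2 := CR m.+2 (ltnSn _); have c3 := CR m.+3 (leqW (ltnSn _)).
case: (st u m.+2) SZ c0 c1 c2 c3 => s l /= SZ c0 c1 c2 c3.
rewrite /algA_step /occ_minus2 /occurs_at.
have -> : m.+3 - 2 = m.+1 by lia.
have -> : m.+3 - 3 = m by lia.
rewrite /=.
case: ifP => hn; last first.
  have -> : (m.+1 + 3 <= size u) = false by lia.
  have -> : (m.+1 + 3 <= size s) = false by lia.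
  by rewrite /=; split.
have -> : (m.+1 + 3 <= size u) = true by lia.
have -> : (m.+1 + 3 <= size s) = true by lia.
rewrite /= !take4 ?SZ; try lia.
rewrite !red_p !red_q c2 c3.
case: (isp (nth 0 u m) (nth 0 u m.+1) (nth 0 u m.+2) (nth 0 u m.+3)) => /=.
  by rewrite nth_set_nth /= eqxx.
case: (isq (nth 0 u m) (nth 0 u m.+1) (nth 0 u m.+2) (nth 0 u m.+3)) => /=.
  by rewrite nth_set_nth /= eqxx.
case: (_ || _) => /=; last by rewrite c2.
by case: l => [l|] /=; rewrite ?nth_set_nth /= ?eqxx ?c2.
Qed.

Theorem theorem4 (e : seq nat) :
  is_inversion_seq e -> algorithmA (algorithmA e) = e.
Proof.
move=> _.
set y := algorithmA e.
have Sy : size y = size e by have [h _] := st_frame e (size e) (leqnn _); exact: h.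
have Sz : size (algorithmA y) = size y by have [h _] := st_frame y (size y) (leqnn _); exact: h.
have H1 := conc_R e.
have H2 : forall t, t < size e -> Rstep (nth 0 y) (nth 0 (algorithmA y)) (fun t => (st y t).2) (size e) t.
  by move=> t ht; rewrite -Sy; apply: conc_R; rewrite Sy.
have [HZ _] := @run2 (nth 0 e) (nth 0 y) (nth 0 (algorithmA y)) (fun t => (st e t).2)
  (fun t => (st y t).2) (size e) erefl erefl H1 H2 (size e) (leqnn _).
apply: (@eq_from_nth _ 0); first by rewrite Sz Sy.
move=> i hi; apply: HZ; by rewrite Sz Sy in hi.
Qed.
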